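(* Let $0<\mu<L$, $q=\mu/L$, and define $A_0=0$, $A_{k+1}=\frac{(1+q)A_k+2\big(1+\sqrt{(1+A_k)(1+qA_k)}\big)}{(1-q)^2}$, $\delta_k=\sqrt{\frac{A_{k+1}}{1+qA_{k+1}}}$ and $\sigma_k=\sqrt{(1+A_k)(1+qA_k)}$ for $k\in\mathbb{N}_0$. Then for every $k\in\mathbb{N}_0$: $A_k\ge0$; $A_{k+1}>0$; $\delta_k>0$; $A_{k+1}-A_k\ge0$; $A_{k+1}-A_k+\sigma_{k+1}-\sigma_k\ge0$; $(1+q)A_{k+1}-A_k\ge0$; $(1+q)A_{k+1}-A_k-\sigma_k+1\ge0$; and $\sigma_k-1\ge0$. *)

(* Defs.v *)
From Stdlib Require Import Reals.
Open Scope R_scope.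

Fixpoint Aseq (q : R) (k : nat) : R :=
  match k with
  | O => 0
  | S k' => let a := Aseq q k' in
            ((1 + q) * a + 2 * (1 + sqrt ((1 + a) * (1 + q * a)))) / (1 - q) ^ 2
  end.

Definition deltaA (q : R) (k : nat) : R :=
  sqrt (Aseq q (S k) / (1 + q * Aseq q (S k))).

Definition sigmaA (q : R) (k : nat) : R :=
  sqrt ((1 + Aseq q k) * (1 + q * Aseq q k)).

(* Main.v *)
Require Import Defs.
From Stdlib Require Import Reals Lra.
Open Scope R_scope.

Lemma div_ge (N d : R) : 0 <= N -> 0 < d -> d <= 1 -> N <= N / d.
Proof.
  intros HN Hd Hd1.
  apply Rmult_le_reg_r with d; auto.
  unfold Rdiv; rewrite Rmult_assoc, Rinv_l by lra. nra.
Qed.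

Lemma sig_ge1 (q a : R) : 0 < q -> 0 <= a -> 1 <= sqrt ((1 + a) * (1 + q * a)).
Proof.
  intros. apply Rle_trans with (sqrt 1); [rewrite sqrt_1; lra|]. apply sqrt_le_1_alt.
  assert (0 <= q * a) by (apply Rmult_le_pos; lra).
  assert (0 <= q * a * a) by (apply Rmult_le_pos; lra). nra.
Qed.

Lemma step (q : R) (k : nat) : 0 < q < 1 -> 0 <= Aseq q k ->
  (1 + q) * Aseq q k + 2 + 2 * sigmaA q k <= Aseq q (S k).
Proof.
  intros Hq Ha. unfold sigmaA.
  change (Aseq q (S k)) with (let a := Aseq q k in
            ((1 + q) * a + 2 * (1 + sqrt ((1 + a) * (1 + q * a)))) / (1 - q) ^ 2).
  cbv zeta.
  set (a := Aseq q k) in *.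
  pose proof (sig_ge1 q a ltac:(lra) Ha).
  set (s := sqrt ((1 + a) * (1 + q * a))) in *.
  replace ((1 + q) * a + 2 + 2 * s) with ((1 + q) * a + 2 * (1 + s)) by ring.
  assert (0 <= q * a) by (apply Rmult_le_pos; lra).
  apply div_ge; simpl; nra.
Qed.

Lemma Anonneg (q : R) (k : nat) : 0 < q < 1 -> 0 <= Aseq q k.
Proof.
  intros Hq. induction k. simpl; lra.
  pose proof (step q k Hq IHk). pose proof (sig_ge1 q (Aseq q k) ltac:(lra) IHk).
  unfold sigmaA in H. nra.
Qed.

Theorem lemma1 (mu L : R) (Hmu : 0 < mu) (HmuL : mu < L) (k : nat) :
  let q := mu / L in
  0 <= Aseq q k /\
  0 < Aseq q (S k) /\
  0 < deltaA q k /\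
  0 <= Aseq q (S k) - Aseq q k /\
  0 <= Aseq q (S k) - Aseq q k + sigmaA q (S k) - sigmaA q k /\
  0 <= (1 + q) * Aseq q (S k) - Aseq q k /\
  0 <= (1 + q) * Aseq q (S k) - Aseq q k - sigmaA q k + 1 /\
  0 <= sigmaA q k - 1.
Proof.
  intros q.
  assert (Hq : 0 < q < 1).
  { unfold q; split. apply Rdiv_lt_0_compat; lra.
    apply Rmult_lt_reg_r with L; [lra|]. unfold Rdiv; rewrite Rmult_assoc, Rinv_l by lra. lra. }
  pose proof (Anonneg q k Hq) as Ha.
  pose proof (step q k Hq Ha) as Hs.
  pose proof (sig_ge1 q (Aseq q k) ltac:(lra) Ha) as Hs1.
  fold (sigmaA q k) in Hs1.
  set (a := Aseq q k) in *. set (b := Aseq q (S k)) in *.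
  assert (Hab : a <= b) by nra.
  assert (Hsig : sigmaA q k <= sigmaA q (S k)).
  { unfold sigmaA. fold a b. apply sqrt_le_1_alt.
    assert (q * a <= q * b) by (apply Rmult_le_compat_l; lra).
    assert (0 <= q * a) by (apply Rmult_le_pos; lra).
    apply Rmult_le_compat; lra. }
  split; [lra|]. split; [nra|]. split.
  { unfold deltaA. fold b. apply sqrt_lt_R0. apply Rdiv_lt_0_compat; nra. }
  repeat split; nra.
Qed.
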